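(* The Vietoris functor $\mathbb{V}\colon \mathbf{CH}\to\mathbf{CH}$ preserves coreflexive equalizers: if $f,g\colon X\to Y$ are morphisms in $\mathbf{CH}$ having a common retraction $k\colon Y\to X$ (i.e. $k\circ f=k\circ g=1_X$) and $h\colon E\to X$ is an equalizer of $f$ and $g$ in $\mathbf{CH}$, then $\mathbb{V}h$ is an equalizer of $\mathbb{V}f$ and $\mathbb{V}g$ in $\mathbf{CH}$.
   Context: $\mathbf{CH}$ denotes the category of compact Hausdorff spaces and continuous maps. For a compact Hausdorff space $X$, $\mathbb{V}X$ is the set of all closed subsets of $X$ (including $\varnothing$) with the Vietoris topology, generated by the sets $\Box U=\{K\in\mathbb{V}X\mid K\subseteq U\}$ and $\Diamond U=\{K\in\mathbb{V}X\mid K\cap U\neq\varnothing\}$ for $U$ open in $X$; it is a compact Hausdorff space. For a continuous $f\colon X\to Y$, $\mathbb{V}f\colon\mathbb{V}X\to\mathbb{V}Y$ is $K\mapsto f[K]$. *)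

(* Defs.v *)
From HB Require Import structures.
From mathcomp Require Import all_boot all_order all_algebra.
From mathcomp Require Import all_classical all_reals all_analysis.
Set Implicit Arguments. Unset Strict Implicit. Unset Printing Implicit Defensive.
Import Order.TTheory GRing.Theory Num.Theory.
Local Open Scope classical_set_scope.

Definition CH (T : topologicalType) : Prop :=
  compact [set: T] /\ hausdorff_space T.

(* Carrier of the Vietoris space: closed subsets of X (including the empty set). *)
Record vietoris (X : topologicalType) := Vietoris {
  vset : set X;
  vclosed : closed vset }.

HB.instance Definition _ (X : topologicalType) := gen_eqMixin (vietoris X).
HB.instance Definition _ (X : topologicalType) := gen_choiceMixin (vietoris X).

Definition vbox (X : topologicalType) (U : set X) : set (vietoris X) :=
  [set K | vset K `<=` U].
Definition vdiamond (X : topologicalType) (U : set X) : set (vietoris X) :=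
  [set K | vset K `&` U !=set0].

Definition vietoris_subbase (X : topologicalType) (p : bool * set X)
  : set (vietoris X) :=
  if p.1 then vbox p.2 else vdiamond p.2.

HB.instance Definition _ (X : topologicalType) :=
  isSubBaseTopological.Build (vietoris X)
    [set p : bool * set X | open p.2] (@vietoris_subbase X).

Lemma vmap_closed (X Y : topologicalType) (f : X -> Y)
  (cX : compact [set: X]) (hY : hausdorff_space Y) (cf : continuous f)
  (K : vietoris X) : closed (f @` vset K).
Proof.
have cK : compact (vset K).
  exact: (@subclosed_compact X (vset K) [set: X] (@vclosed X K) cX).
have cfK : compact (f @` vset K).
  apply: continuous_compact => //; exact: continuous_subspaceT.
exact: (@compact_closed Y _ hY cfK).
Qed.

Definition vmap (X Y : topologicalType) (f : X -> Y)
  (cX : compact [set: X]) (hY : hausdorff_space Y) (cf : continuous f)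
  (K : vietoris X) : vietoris Y :=
  @Vietoris Y (f @` vset K) (@vmap_closed X Y f cX hY cf K).

(* h : E -> X is an equalizer of f, g : X -> Y in the category CH
   (E, X, Y are assumed to be objects of CH separately). *)
Definition is_equalizer_CH (E X Y : topologicalType)
  (h : E -> X) (f g : X -> Y) : Prop :=
  [/\ continuous h, f \o h = g \o h &
    forall (Z : topologicalType), CH Z ->
      forall u : Z -> X, continuous u -> f \o u = g \o u ->
        exists! v : Z -> E, continuous v /\ h \o v = u].

(* Main.v *)
Require Import Defs.
From HB Require Import structures.
From mathcomp Require Import all_boot all_order all_algebra.
From mathcomp Require Import all_classical all_reals all_analysis.
Local Open Scope classical_set_scope.

Lemma vsub_open (X : topologicalType) (b : bool) (U : set X) : open U ->
  open (vietoris_subbase (b, U)).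
Proof.
move=> oU. rewrite /open /=.
exists [set vietoris_subbase (b, U)].
  move=> _ ->. apply: finI_from1. exact: oU.
by rewrite bigcup_set1.
Qed.

Lemma vietoris_cont (Z X : topologicalType) (F : Z -> vietoris X) :
  (forall U, open U -> open (F @^-1` vbox U)) ->
  (forall U, open U -> open (F @^-1` vdiamond U)) -> continuous F.
Proof.
move=> Hb Hd; apply/continuousP => A [D' sD' <-].
rewrite preimage_bigcup; apply: bigcup_open => C /sD'.
move=> HC; have {HC} : finI_from [set p : bool * set X | open p.2] (@vietoris_subbase X) C := HC.
rewrite /=. rewrite filterI_iter_finI => -[n _]; elim: n C => [|n IH] C /=.
  move=> [->|[[[] U] /= oU <-]]; first by rewrite preimage_setT; exact: openT.
  - exact: Hb.
  - exact: Hd.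
move=> [P /IH oP [Q /IH oQ <-]]; rewrite preimage_setI; exact: openI.
Qed.

Lemma veq (X : topologicalType) (K1 K2 : vietoris X) :
  vset K1 = vset K2 -> K1 = K2.
Proof.
case: K1 K2 => [A cA] [B cB] /= eAB; subst B.
by rewrite (Prop_irrelevance cA cB).
Qed.

Lemma vbox_open (X : topologicalType) (U : set X) : open U ->
  open (vbox U : set (vietoris X)).
Proof. exact: (@vsub_open X true U). Qed.

Lemma vdiamond_open (X : topologicalType) (U : set X) : open U ->
  open (vdiamond U : set (vietoris X)).
Proof. exact: (@vsub_open X false U). Qed.

Lemma vmap_cont (X Y : topologicalType) (f : X -> Y)
  (cX : compact [set: X]) (hY : hausdorff_space Y) (cf : continuous f) :
  continuous (vmap cX hY cf).
Proof.
apply: vietoris_cont => U oU.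
- have -> : vmap cX hY cf @^-1` vbox U = vbox (f @^-1` U).
    rewrite predeqE => K; split.
      by move=> H x Kx; apply: H; exists x.
    by move=> H _ [x Kx <-]; apply: H.
  apply: vbox_open; exact: (proj1 (continuousP f) cf U oU).
- have -> : vmap cX hY cf @^-1` vdiamond U = vdiamond (f @^-1` U).
    rewrite predeqE => K; split.
      by move=> [_ [[x Kx <-] Ufx]]; exists x.
    by move=> [x [Kx Ufx]]; exists (f x); split => //; exists x.
  apply: vdiamond_open; exact: (proj1 (continuousP f) cf U oU).
Qed.

Lemma CH_bool : CH bool.
Proof.
split; first by apply: finite_compact; exact: finite_finset.
exact: discrete_hausdorff.
Qed.

Theorem proposition2p6 (E X Y : topologicalType)
  (cE : compact [set: E]) (hE : hausdorff_space E)
  (cX : compact [set: X]) (hX : hausdorff_space X)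
  (cY : compact [set: Y]) (hY : hausdorff_space Y)
  (f g : X -> Y) (k : Y -> X) (h : E -> X)
  (cf : continuous f) (cg : continuous g) (ck : continuous k)
  (ch : continuous h) :
  k \o f = id -> k \o g = id ->
  is_equalizer_CH h f g ->
  is_equalizer_CH (vmap cE hX ch) (vmap cX hY cf) (vmap cX hY cg).
Proof.
move=> kf kg [_ fgh univ].
have surj : forall x, f x = g x -> exists e, h e = x.
  move=> x fgx.
  have [v [[_ hv] _]] := univ bool CH_bool (fun=> x) (@cst_continuous bool X x)
    (funext (fun _ => fgx)).
  by exists (v true); have := congr1 (fun F => F true) hv.
have inj : injective h.
  move=> e1 e2 he.
  have [v [_ uv]] := univ bool CH_bool (fun=> h e1) (@cst_continuous bool X (h e1))
    (funext (fun _ => congr1 (fun F => F e1) fgh)).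
  have v1 := uv (fun=> e1) (conj (@cst_continuous bool E e1) erefl).
  have v2 := uv (fun=> e2) (conj (@cst_continuous bool E e2) (funext (fun _ => esym he))).
  by have := congr1 (fun F => F true) (etrans (esym v1) v2).
split.
- exact: vmap_cont.
- apply: funext => K; apply: veq => /=.
  by rewrite !image_comp fgh.
move=> Z CHZ u cu fu.
have sub : forall z x, vset (u z) x -> f x = g x.
  move=> z x ux.
  have e : f @` vset (u z) = g @` vset (u z).
    by have /= := congr1 (@vset Y) (congr1 (fun F => F z) fu).
  have : (f @` vset (u z)) (f x) by exists x.
  rewrite e => -[x' ux' gx'].
  have kk : k (g x') = k (f x) by rewrite gx'.
  have e1 : k (g x') = x' := congr1 (fun F => F x') kg.
  have e2 : k (f x) = x := congr1 (fun F => F x) kf.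
  by rewrite -gx' -e1 kk e2.
have cl : forall z, closed (h @^-1` vset (u z)).
  move=> z; move: (@vclosed X (u z)); exact: (proj1 (continuous_closedP h) ch).
pose v z := @Vietoris E (h @^-1` vset (u z)) (cl z).
have hvu : vmap cE hX ch \o v = u.
  apply: funext => z; apply: veq => /=.
  rewrite predeqE => x; split; first by move=> [e ue <-].
  move=> ux; have [e he] := surj x (sub z x ux).
  by exists e => //; rewrite /= he.
have Wopen : forall V : set E, open V -> open (~` (h @` ~` V)).
  move=> V oV; apply: closed_openC.
  exact: (@vmap_closed E X h cE hX ch (@Vietoris E (~` V) (open_closedC oV))).
exists v; split.
  split => //.
  apply: vietoris_cont => V oV.
  - have -> : v @^-1` vbox V = u @^-1` vbox (~` (h @` ~` V)).
      rewrite predeqE => z; split.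
        move=> H x ux [e nVe he]; apply: nVe; apply: H.
        by rewrite /= he.
      move=> H e uhe; apply: contrapT => nVe.
      by apply: (H (h e) uhe); exists e.
    apply: (proj1 (continuousP u) cu); apply: vbox_open; exact: Wopen.
  - have -> : v @^-1` vdiamond V = u @^-1` vdiamond (~` (h @` ~` V)).
      rewrite predeqE => z; split.
        move=> [e [uhe Ve]]; exists (h e); split => //.
        by move=> [e' nVe' /inj ee']; apply: nVe'; rewrite ee'.
      move=> [x [ux Wx]]; have [e he] := surj x (sub z x ux).
      exists e; split; first by rewrite /= he.
      apply: contrapT => nVe; apply: Wx; by exists e.
    apply: (proj1 (continuousP u) cu); apply: vdiamond_open; exact: Wopen.
move=> v' [_ hv'].
apply: funext => z; apply: veq => /=.
have e : h @` vset (v' z) = vset (u z).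
  by have /= := congr1 (@vset X) (congr1 (fun F => F z) hv').
rewrite -e predeqE => x; split.
  by move=> [x' vx' /inj <-].
by move=> vx; exists x.
Qed.
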